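(* In the I-phase model, for every formula $A$: (1) for every formula $D$, every $n\ge 0$ and $T_1,\dots,T_n$ each a closed term or an atom, if $c^D T_1\cdots T_n\in[\![A]\!]$ then $c^D T_1\cdots T_n\in A^\dagger$; and (2) $A^\dagger\subseteq[\![A]\!]$.
   Context: System $\mathbf{IL}_{\mathbf{at}}$: formulas $A ::= X\mid A\to B\mid\forall X.A$ ($X$ atoms); terms $t ::= x\mid c^A\mid\lambda x.t\mid ts\mid\Lambda X.t\mid tX$ (a term-constant $c^A$ for each formula; $tX$ only with $X$ an atom). $\Gamma\vdash t:A$ derivable by: $\Gamma,x:A\vdash x:A$; $\Gamma\vdash c^A:A$; $\to$-introduction/elimination (abstraction/application); $\forall$-introduction ($\Gamma\vdash\Lambda X.t:\forall X.A$ from $\Gamma\vdash t:A$, $X$ not free in formulas of $\Gamma$); $\forall$-elimination ($\Gamma\vdash tY:A[X:=Y]$ from $\Gamma\vdash t:\forall X.A$, $Y$ an atom). $\beta$-reduction $(\lambda x.t)s\to_\beta t[x:=s]$, $(\Lambda X.t)Y\to_\beta t[X:=Y]$ in any subterm position; normal = no redex; $\twoheadrightarrow$ reflexive-transitive closure of $\to_\beta$. $\eta$-expansion: $t\to_{\eta^{-1}}\lambda x.(tx)$ ($x\notin FV(t)$), $t\to_{\eta^{-1}}\Lambda X.(tX)$ ($X\notin FV(t)$). Closed term = no free term-variables. $[\![A]\!]$ = closed terms $t$ with $t\twoheadrightarrow s$ for some normal $s$ such that $\vdash s:A$ is derivable. I-phase model: interpretation of formulas as sets of closed terms: $X^\dagger=[\![X]\!]$;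 $(B\to C)^\dagger$ = closed $t$ such that $t\twoheadrightarrow u\to_{\eta^{-1}}\lambda x.(ux)$ for some $u$ with $x\notin FV(u)$ and $ux[x:=s]\in C^\dagger$ for all $s\in B^\dagger$; $(\forall X.A)^\dagger$ = closed $t$ such that $t\twoheadrightarrow u\to_{\eta^{-1}}\Lambda X.(uX)$ for some $u$ with $X\notin FV(u)$ and $uX[X:=Y]\in(A[X:=Y])^\dagger$ for all atoms $Y$. *)

(* Defs.v *)
(* System IL_at with de Bruijn indices for both atoms and
   term variables. *)
From Stdlib Require Import List Relations.
Import ListNotations.

(** Formulas: atoms are de Bruijn indices (free atoms = indices not bound
    by an enclosing [All]). *)
Inductive form : Type :=
| Atom (X : nat)
| Arr (A B : form)
| All (A : form).

(** Terms: term variables are de Bruijn indices bound by [Lam];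
    atoms (in [TApp] and inside the formulas of constants) are de Bruijn
    indices bound by [TLam]. *)
Inductive term : Type :=
| Var (x : nat)
| Cst (A : form)
| Lam (t : term)
| App (t s : term)
| TLam (t : term)
| TApp (t : term) (X : nat).

Definition scons {T : Type} (x : T) (f : nat -> T) (n : nat) : T :=
  match n with 0 => x | S m => f m end.

Definition up_ren (xi : nat -> nat) : nat -> nat := scons 0 (fun n => S (xi n)).

Fixpoint fren (xi : nat -> nat) (A : form) : form :=
  match A with
  | Atom X => Atom (xi X)
  | Arr A B => Arr (fren xi A) (fren xi B)
  | All A => All (fren (up_ren xi) A)
  end.

Definition fsubst1 (A : form) (Y : nat) : form := fren (scons Y (fun n => n)) A.

Fixpoint tren (xi : nat -> nat) (t : term) : term :=
  match t with
  | Var x => Var x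
  | Cst A => Cst (fren xi A)
  | Lam t => Lam (tren xi t)
  | App t s => App (tren xi t) (tren xi s)
  | TLam t => TLam (tren (up_ren xi) t)
  | TApp t X => TApp (tren xi t) (xi X)
  end.

Fixpoint vren (xi : nat -> nat) (t : term) : term :=
  match t with
  | Var x => Var (xi x)
  | Cst A => Cst A
  | Lam t => Lam (vren (up_ren xi) t)
  | App t s => App (vren xi t) (vren xi s)
  | TLam t => TLam (vren xi t)
  | TApp t X => TApp (vren xi t) X
  end.

Fixpoint tsubst (sigma : nat -> term) (t : term) : term :=
  match t with
  | Var x => sigma x
  | Cst A => Cst A
  | Lam t => Lam (tsubst (scons (Var 0) (fun n => vren S (sigma n))) t)
  | App t s => App (tsubst sigma t) (tsubst sigma s)
  | TLam t => TLam (tsubst (fun n => tren S (sigma n)) t)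
  | TApp t X => TApp (tsubst sigma t) X
  end.

Definition subst1 (t s : term) : term := tsubst (scons s Var) t.
Definition tsubst1 (t : term) (Y : nat) : term := tren (scons Y (fun n => n)) t.

(** Typing: [has_type G t A] is [G |- t : A]; variable [Var n] has the
    n-th formula of [G].  The side condition "X not free in G" of
    forall-introduction is expressed by shifting the atoms of [G]. *)
Inductive has_type : list form -> term -> form -> Prop :=
| ty_var G n A : nth_error G n = Some A -> has_type G (Var n) A
| ty_cst G A : has_type G (Cst A) A
| ty_lam G t A B : has_type (A :: G) t B -> has_type G (Lam t) (Arr A B)
| ty_app G t s A B : has_type G t (Arr A B) -> has_type G s A ->
    has_type G (App t s) B
| ty_tlam G t A : has_type (map (fren S) G) t A -> has_type G (TLam t) (All A)
| ty_tapp G t A Y : has_type G t (All A) -> has_type G (TApp t Y) (fsubst1 A Y).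

Inductive step : term -> term -> Prop :=
| st_beta t s : step (App (Lam t) s) (subst1 t s)
| st_tbeta t Y : step (TApp (TLam t) Y) (tsubst1 t Y)
| st_lam t t' : step t t' -> step (Lam t) (Lam t')
| st_appl t t' s : step t t' -> step (App t s) (App t' s)
| st_appr t s s' : step s s' -> step (App t s) (App t s')
| st_tlam t t' : step t t' -> step (TLam t) (TLam t')
| st_tapp t t' Y : step t t' -> step (TApp t Y) (TApp t' Y).

Definition red : term -> term -> Prop := clos_refl_trans term step.

Definition normal (t : term) : Prop := forall t', ~ step t t'.

Fixpoint closed_at (k : nat) (t : term) : Prop :=
  match t with
  | Var x => x < k
  | Cst _ => True
  | Lam t => closed_at (S k) t
  | App t s => closed_at k t /\ closed_at k s
  | TLam t => closed_at k t
  | TApp t _ => closed_at k t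
  end.

Definition closed (t : term) : Prop := closed_at 0 t.

Definition sem (A : form) (t : term) : Prop :=
  closed t /\ exists s, red t s /\ normal s /\ has_type [] s A.

(** The body of the eta-expansions: for [u ->eta^-1 Lam (App u' x)] with
    x not free in u (de Bruijn: u' = vren S u, x = Var 0), the term
    [u x [x:=s]]; and for [u ->eta^-1 TLam (TApp u' X)], the term
    [u X [X:=Y]]. *)
Definition eta_body (u : term) : term := App (vren S u) (Var 0).
Definition teta_body (u : term) : term := TApp (tren S u) 0.

(** The I-phase interpretation.  [dag A rho] is the interpretation of the
    formula [fren rho A] (rho renames the free atoms of A); this
    environment makes the recursion structural, since
    (forall X.A)[X:=Y] unfolds to a renaming of A. *)
Fixpoint dag (A : form) (rho : nat -> nat) (t : term) : Prop :=
  match A with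
  | Atom X => sem (Atom (rho X)) t
  | Arr B C =>
      closed t /\ exists u, red t u /\
        forall s, dag B rho s -> dag C rho (subst1 (eta_body u) s)
  | All B =>
      closed t /\ exists u, red t u /\
        forall Y : nat, dag B (scons Y rho) (tsubst1 (teta_body u) Y)
  end.

Definition dagger (A : form) (t : term) : Prop := dag A (fun n => n) t.

Inductive arg : Type := ATm (t : term) | AAt (X : nat).

Definition arg_ok (a : arg) : Prop :=
  match a with ATm t => closed t | AAt _ => True end.

Definition apply_args (h : term) (l : list arg) : term :=
  fold_left (fun acc a => match a with ATm s => App acc s | AAt X => TApp acc X end) l h.

(* Main.v *)
Require Import Defs.
From Stdlib Require Import List Relations Lia Arith PeanoNat.
Import ListNotations.

Arguments subst1 : simpl never.
Arguments tsubst1 : simpl never.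
Arguments fsubst1 : simpl never.
Arguments eta_body : simpl never.
Arguments teta_body : simpl never.

Lemma up_ren_ext f g : (forall x, f x = g x) -> forall x, up_ren f x = up_ren g x.
Proof. intros H [|x]; simpl; auto. Qed.

Lemma fren_ext A : forall f g, (forall x, f x = g x) -> fren f A = fren g A.
Proof. induction A; intros f g H; simpl; f_equal; auto. apply IHA. apply up_ren_ext; auto. Qed.

Lemma fren_comp A : forall f g, fren f (fren g A) = fren (fun x => f (g x)) A.
Proof. induction A; intros f g; simpl; f_equal; auto.
  rewrite IHA. apply fren_ext. intros [|x]; reflexivity. Qed.

Lemma fren_id A : forall f, (forall x, f x = x) -> fren f A = A.
Proof. induction A; intros f H; simpl; f_equal; auto. apply IHA. intros [|x]; simpl; auto. Qed.

Lemma tren_ext t : forall f g, (forall x, f x = g x) -> tren f t = tren g t.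
Proof. induction t; intros f g H; simpl; f_equal; auto using fren_ext. apply IHt. apply up_ren_ext; auto. Qed.

Lemma tren_comp t : forall f g, tren f (tren g t) = tren (fun x => f (g x)) t.
Proof. induction t; intros f g; simpl; f_equal; auto using fren_comp.
  rewrite IHt. apply tren_ext. intros [|x]; reflexivity. Qed.

Lemma tren_id t : forall f, (forall x, f x = x) -> tren f t = t.
Proof. induction t; intros f H; simpl; f_equal; auto using fren_id. apply IHt. intros [|x]; simpl; auto. Qed.

Lemma vren_ext t : forall f g, (forall x, f x = g x) -> vren f t = vren g t.
Proof. induction t; intros f g H; simpl; f_equal; auto. apply IHt. apply up_ren_ext; auto. Qed.

Lemma vren_comp t : forall f g, vren f (vren g t) = vren (fun x => f (g x)) t.
Proof. induction t; intros f g; simpl; f_equal; auto.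
  rewrite IHt. apply vren_ext. intros [|x]; reflexivity. Qed.

Lemma tren_vren t : forall xi f, tren xi (vren f t) = vren f (tren xi t).
Proof. induction t; intros xi f; simpl; f_equal; auto. Qed.

Lemma tsubst_ext t : forall s r, (forall n, s n = r n) -> tsubst s t = tsubst r t.
Proof. induction t; intros s r H; simpl; f_equal; auto.
  - apply IHt. intros [|n]; simpl; auto. rewrite H; auto.
  - apply IHt. intros n; rewrite H; auto. Qed.

Lemma tsubst_vren t : forall s f, tsubst s (vren f t) = tsubst (fun n => s (f n)) t.
Proof. induction t; intros s f; simpl; f_equal; auto.
  - rewrite IHt. apply tsubst_ext. intros [|n]; reflexivity.
  - rewrite IHt. reflexivity. Qed.

Lemma vren_tsubst t : forall s f, vren f (tsubst s t) = tsubst (fun n => vren f (s n)) t.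
Proof. induction t; intros s f; simpl; f_equal; auto.
  - rewrite IHt. apply tsubst_ext. intros [|n]; simpl; [reflexivity|].
    rewrite !vren_comp. apply vren_ext. reflexivity.
  - rewrite IHt. apply tsubst_ext. intros n. symmetry; apply tren_vren. Qed.

Lemma tren_tsubst t : forall xi s, tren xi (tsubst s t) = tsubst (fun n => tren xi (s n)) (tren xi t).
Proof. induction t; intros xi s; simpl; f_equal; auto.
  - rewrite IHt. apply tsubst_ext. intros [|n]; simpl; [reflexivity|]. apply tren_vren.
  - rewrite IHt. apply tsubst_ext. intros n. rewrite !tren_comp. apply tren_ext. reflexivity. Qed.

Lemma tsubst_comp t : forall s1 s2, tsubst s1 (tsubst s2 t) = tsubst (fun n => tsubst s1 (s2 n)) t.
Proof. induction t; intros s1 s2; simpl; f_equal; auto.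
  - rewrite IHt. apply tsubst_ext. intros [|n]; simpl; [reflexivity|].
    rewrite tsubst_vren, vren_tsubst. apply tsubst_ext. reflexivity.
  - rewrite IHt. apply tsubst_ext. intros n. rewrite tren_tsubst. reflexivity. Qed.

Lemma tsubst_id t : forall s, (forall n, s n = Var n) -> tsubst s t = t.
Proof. induction t; intros s H; simpl; f_equal; auto.
  - apply IHt. intros [|n]; simpl; auto. rewrite H; auto.
  - apply IHt. intros n; rewrite H; auto. Qed.

Lemma eta_lemma u s : subst1 (eta_body u) s = App u s.
Proof. unfold subst1, eta_body; simpl. f_equal. rewrite tsubst_vren. apply tsubst_id. reflexivity. Qed.

Lemma teta_lemma u Y : tsubst1 (teta_body u) Y = TApp u Y.
Proof. unfold tsubst1, teta_body; simpl. f_equal. rewrite tren_comp. apply tren_id. reflexivity. Qed.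

Lemma subst_beta s a b : tsubst s (subst1 a b) =
  subst1 (tsubst (scons (Var 0) (fun n => vren S (s n))) a) (tsubst s b).
Proof. unfold subst1; rewrite !tsubst_comp; apply tsubst_ext; intros [|n]; simpl; [reflexivity|].
  rewrite tsubst_vren, tsubst_id; reflexivity. Qed.

Lemma subst_tbeta s a Y : tsubst s (tsubst1 a Y) = tsubst1 (tsubst (fun n => tren S (s n)) a) Y.
Proof. unfold tsubst1. symmetry. rewrite tren_tsubst. apply tsubst_ext. intros n.
  rewrite tren_comp. apply tren_id. reflexivity. Qed.

Lemma tren_beta xi a b : tren xi (subst1 a b) = subst1 (tren xi a) (tren xi b).
Proof. unfold subst1; rewrite tren_tsubst; apply tsubst_ext; intros [|n]; reflexivity. Qed.

Lemma tren_tbeta xi a Y : tren xi (tsubst1 a Y) = tsubst1 (tren (up_ren xi) a) (xi Y).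
Proof. unfold tsubst1; rewrite !tren_comp; apply tren_ext; intros [|n]; reflexivity. Qed.

Lemma fren_fsubst xi A Y : fren xi (fsubst1 A Y) = fsubst1 (fren (up_ren xi) A) (xi Y).
Proof. unfold fsubst1; rewrite !fren_comp; apply fren_ext; intros [|n]; reflexivity. Qed.

Ltac cong := first [ apply st_lam; solve [auto] | apply st_appl; solve [auto] | apply st_appr; solve [auto] | apply st_tlam; solve [auto] | apply st_tapp; solve [auto]].

Lemma step_tren t t' : step t t' -> forall xi, step (tren xi t) (tren xi t').
Proof. induction 1; intros xi; simpl;
  try (rewrite tren_beta; apply st_beta); try (rewrite tren_tbeta; apply st_tbeta); cong. Qed.

Lemma step_tsubst t t' : step t t' -> forall s, step (tsubst s t) (tsubst s t').
Proof. induction 1; intros sg; simpl;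
  try (rewrite subst_beta; apply st_beta); try (rewrite subst_tbeta; apply st_tbeta); cong. Qed.

Lemma step_tren_inv a b : step a b -> forall xi w, a = tren xi w ->
  exists w', step w w' /\ b = tren xi w'.
Proof. induction 1; intros xi w E; destruct w; simpl in E; try discriminate; injection E; intros; subst.
  - destruct w1; simpl in *; try discriminate. injection H0; intros; subst.
    eexists; split; [apply st_beta| symmetry; apply tren_beta].
  - destruct w; simpl in *; try discriminate. injection H0; intros; subst.
    eexists; split; [apply st_tbeta| symmetry; apply tren_tbeta].
  - destruct (IHstep _ _ eq_refl) as [w' [Hs ->]]. exists (Lam w'); split; [constructor; auto| reflexivity].
  - destruct (IHstep _ _ eq_refl) as [w' [Hs ->]]. exists (App w' w2); split; [constructor; auto| reflexivity].
  - destruct (IHstep _ _ eq_refl) as [w' [Hs ->]]. exists (App w1 w'); split; [constructor; auto| reflexivity].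
  - destruct (IHstep _ _ eq_refl) as [w' [Hs ->]]. exists (TLam w'); split; [constructor; auto| reflexivity].
  - destruct (IHstep _ _ eq_refl) as [w' [Hs ->]]. exists (TApp w' X); split; [constructor; auto| reflexivity].
Qed.

Definition inert (s : nat -> term) := forall n, (exists m, s n = Var m) \/ (exists D, s n = Cst D).

Lemma inert_up s : inert s -> inert (scons (Var 0) (fun n => vren S (s n))).
Proof. intros H [|n]; simpl; [left; eauto|]. destruct (H n) as [[m Hm]|[D Hm]]; rewrite Hm; simpl; eauto. Qed.

Lemma inert_tup s : inert s -> inert (fun n => tren S (s n)).
Proof. intros H n; simpl. destruct (H n) as [[m Hm]|[D Hm]]; rewrite Hm; simpl; eauto. Qed.

Lemma step_tsubst_inv a b : step a b -> forall s w, inert s -> a = tsubst s w ->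
  exists w', step w w' /\ b = tsubst s w'.
Proof. induction 1; intros sg w Hi E;
  (destruct w as [n| | | | |]; simpl in E;
   [destruct (Hi n) as [[m Hm]|[D Hm]]; rewrite Hm in E; discriminate| ..]);
  try discriminate; injection E; intros; subst.
  - destruct w1 as [n| | | | |]; simpl in *; try discriminate;
    [destruct (Hi n) as [[m Hm]|[D Hm]]; rewrite Hm in *; discriminate|].
    injection H0; intros; subst.
    eexists; split; [apply st_beta| symmetry; apply subst_beta].
  - destruct w as [n| | | | |]; simpl in *; try discriminate;
    [destruct (Hi n) as [[m Hm]|[D Hm]]; rewrite Hm in *; discriminate|].
    injection H0; intros; subst.
    eexists; split; [apply st_tbeta| symmetry; apply subst_tbeta].
  - destruct (IHstep _ _ (inert_up _ Hi) eq_refl) as [w' [Hs ->]]. exists (Lam w'); split; [constructor; auto| reflexivity].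
  - destruct (IHstep _ _ Hi eq_refl) as [w' [Hs ->]]. exists (App w' w2); split; [constructor; auto| reflexivity].
  - destruct (IHstep _ _ Hi eq_refl) as [w' [Hs ->]]. exists (App w1 w'); split; [constructor; auto| reflexivity].
  - destruct (IHstep _ _ (inert_tup _ Hi) eq_refl) as [w' [Hs ->]]. exists (TLam w'); split; [constructor; auto| reflexivity].
  - destruct (IHstep _ _ Hi eq_refl) as [w' [Hs ->]]. exists (TApp w' X); split; [constructor; auto| reflexivity].
Qed.

Lemma ty_ren G t A : has_type G t A -> forall xi, has_type (map (fren xi) G) (tren xi t) (fren xi A).
Proof. induction 1; intros xi; simpl.
  - constructor. apply map_nth_error; auto.
  - constructor.
  - constructor. apply IHhas_type.
  - eapply ty_app; [apply IHhas_type1| apply IHhas_type2].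
  - constructor. specialize (IHhas_type (up_ren xi)). rewrite map_map in *.
    erewrite map_ext; [exact IHhas_type|]. intros a. rewrite !fren_comp. apply fren_ext. reflexivity.
  - rewrite fren_fsubst. constructor. apply IHhas_type.
Qed.

Lemma ty_abs w : forall G G' s C, inert s ->
  (forall n X, has_type G (s n) X -> nth_error G' n = Some X) ->
  has_type G (tsubst s w) C -> has_type G' w C.
Proof. induction w; intros G G' sg C Hi Hs Ht; simpl in Ht.
  - constructor. auto.
  - inversion Ht; subst; constructor.
  - inversion Ht; subst. constructor. eapply IHw; [apply inert_up; eauto| |eauto].
    intros [|n] X HX; simpl in *.
    + inversion HX; subst. simpl in *. congruence.
    + destruct (Hi n) as [[m Hm]|[D Hm]]; rewrite Hm in *; simpl in HX; inversion HX; subst.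
      * apply Hs. rewrite Hm. constructor. auto.
      * apply Hs. rewrite Hm. constructor.
  - inversion Ht; subst. eapply ty_app; [eapply IHw1| eapply IHw2]; eauto.
  - inversion Ht; subst. constructor. eapply IHw; [apply inert_tup; eauto| |eauto].
    intros n X HX; simpl in *.
    destruct (Hi n) as [[m Hm]|[D Hm]]; rewrite Hm in *; simpl in HX; inversion HX; subst.
    * rewrite nth_error_map in *. destruct (nth_error G m) eqn:E; simpl in *; try discriminate.
      injection H2; intros; subst. rewrite (Hs n f); auto. rewrite Hm. constructor; auto.
    * rewrite nth_error_map. rewrite (Hs n D); auto. rewrite Hm. constructor.
  - inversion Ht; subst. constructor. eapply IHw; eauto.
Qed.

Fixpoint fo (x : nat) (A : form) : Prop :=
  match A with Atom X => x = X | Arr A B => fo x A \/ fo x B | All A => fo (S x) A end.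

Fixpoint tfo (x : nat) (t : term) : Prop :=
  match t with
  | Var _ => False | Cst A => fo x A | Lam t => tfo x t
  | App t s => tfo x t \/ tfo x s | TLam t => tfo (S x) t
  | TApp t X => tfo x t \/ x = X end.

Fixpoint fbound (A : form) : nat :=
  match A with Atom X => S X | Arr A B => max (fbound A) (fbound B) | All A => pred (fbound A) end.

Fixpoint tbound (t : term) : nat :=
  match t with
  | Var _ => 0 | Cst A => fbound A | Lam t => tbound t
  | App t s => max (tbound t) (tbound s) | TLam t => pred (tbound t)
  | TApp t X => max (tbound t) (S X) end.

Lemma fbound_ok A : forall x, fo x A -> x < fbound A.
Proof. induction A; intros x H; simpl in *.
  - lia.
  - destruct H as [H|H]; [apply IHA1 in H| apply IHA2 in H]; lia.
  - apply IHA in H. lia. Qed.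

Lemma tbound_ok t : forall y, tfo y t -> y < tbound t.
Proof. induction t; intros y H; simpl in *.
  - contradiction.
  - apply fbound_ok; auto.
  - auto.
  - destruct H as [H|H]; [apply IHt1 in H| apply IHt2 in H]; lia.
  - apply IHt in H. lia.
  - destruct H as [H|H]; [apply IHt in H|]; lia. Qed.

Lemma fo_ren A : forall f y, fo y (fren f A) -> exists z, fo z A /\ y = f z.
Proof. induction A; intros f y H; simpl in *.
  - eauto.
  - destruct H as [H|H]; [apply IHA1 in H| apply IHA2 in H]; destruct H as [z [? ?]]; eauto.
  - apply IHA in H. destruct H as [[|z] [H1 H2]]; simpl in H2; [discriminate|].
    injection H2; intros; subst. eauto. Qed.

Lemma fo_ren_fwd A : forall f z, fo z A -> fo (f z) (fren f A).
Proof. induction A; intros f z H; simpl in *.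
  - subst; auto.
  - destruct H; [left|right]; auto.
  - apply (IHA (up_ren f) (S z)). auto. Qed.

Lemma tfo_ren t : forall f y, tfo y (tren f t) -> exists z, tfo z t /\ y = f z.
Proof. induction t; intros f y H; simpl in *.
  - contradiction.
  - apply fo_ren; auto.
  - auto.
  - destruct H as [H|H]; [apply IHt1 in H| apply IHt2 in H]; destruct H as [z [? ?]]; eauto.
  - apply IHt in H. destruct H as [[|z] [H1 H2]]; simpl in H2; [discriminate|].
    injection H2; intros; subst. eauto.
  - destruct H as [H|H]; [apply IHt in H; destruct H as [z [? ?]]; eauto|]. subst; eauto. Qed.

Lemma tfo_vren t : forall f y, tfo y (vren f t) -> tfo y t.
Proof. induction t; intros f y H; simpl in *; intuition eauto. Qed.

Lemma tfo_subst t : forall s x, tfo x (tsubst s t) -> tfo x t \/ exists n, tfo x (s n).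
Proof. induction t; intros sg y H; simpl in *.
  - right; eauto.
  - auto.
  - apply IHt in H. destruct H as [H|[[|n] H]]; simpl in *; auto; [contradiction|].
    right. exists n. eapply tfo_vren; eauto.
  - destruct H as [H|H]; [apply IHt1 in H| apply IHt2 in H]; intuition.
  - apply IHt in H. destruct H as [H|[n H]]; auto. right. exists n.
    apply tfo_ren in H. destruct H as [z [H1 H2]]. injection H2; intros; subst; auto.
  - destruct H as [H|H]; [apply IHt in H|]; intuition. Qed.

Lemma step_tfo t t' : step t t' -> forall x, tfo x t' -> tfo x t.
Proof. induction 1; intros x H'; simpl in *; intuition.
  - apply tfo_subst in H'. destruct H' as [H|[[|n] H]]; simpl in *; auto. contradiction.
  - unfold tsubst1 in H'. apply tfo_ren in H'. destruct H' as [[|z] [H1 H2]]; simpl in *; subst; auto. Qed.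

Lemma red_tfo t t' : red t t' -> forall x, tfo x t' -> tfo x t.
Proof. induction 1; intros; eauto using step_tfo. Qed.

Lemma fren_ext_fo A : forall f g, (forall x, fo x A -> f x = g x) -> fren f A = fren g A.
Proof. induction A; intros f g H; simpl in *; f_equal; auto.
  apply IHA. intros [|x] Hx; simpl; auto. Qed.

Lemma tren_ext_tfo t : forall f g, (forall x, tfo x t -> f x = g x) -> tren f t = tren g t.
Proof. induction t; intros f g H; simpl in *; f_equal; auto using fren_ext_fo.
  apply IHt. intros [|x] Hx; simpl; auto. Qed.

Lemma red_app_l a b s : red a b -> red (App a s) (App b s).
Proof. induction 1; [apply rt_step; apply st_appl; auto| apply rt_refl| eapply rt_trans; eauto]. Qed.
Lemma red_app_r a b s : red a b -> red (App s a) (App s b).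
Proof. induction 1; [apply rt_step; apply st_appr; auto| apply rt_refl| eapply rt_trans; eauto]. Qed.
Lemma red_tapp a b Y : red a b -> red (TApp a Y) (TApp b Y).
Proof. induction 1; [apply rt_step; apply st_tapp; auto| apply rt_refl| eapply rt_trans; eauto]. Qed.
Lemma red_lam a b : red a b -> red (Lam a) (Lam b).
Proof. induction 1; [apply rt_step; apply st_lam; auto| apply rt_refl| eapply rt_trans; eauto]. Qed.
Lemma red_tlam a b : red a b -> red (TLam a) (TLam b).
Proof. induction 1; [apply rt_step; apply st_tlam; auto| apply rt_refl| eapply rt_trans; eauto]. Qed.

Lemma red_subst_inv s w n : inert s -> red (tsubst s w) n -> normal n ->
  exists w', red w w' /\ normal w' /\ n = tsubst s w'.
Proof. intros Hi H Hn. apply clos_rt_rt1n in H. remember (tsubst s w) as a eqn:E.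
  revert w E. induction H; intros w E; subst.
  - exists w; split; [apply rt_refl|]. split; auto. intros w' Hw. apply (Hn (tsubst s w')).
    apply step_tsubst; auto.
  - destruct (step_tsubst_inv _ _ H s w Hi eq_refl) as [w1 [Hs ->]].
    destruct (IHclos_refl_trans_1n Hn w1 eq_refl) as [w' [? [? ?]]].
    exists w'; split; [eapply rt_trans; [apply rt_step; eauto| auto]| auto]. Qed.

Lemma red_tren_inv xi w n : red (tren xi w) n -> normal n ->
  exists w', red w w' /\ normal w' /\ n = tren xi w'.
Proof. intros H Hn. apply clos_rt_rt1n in H. remember (tren xi w) as a eqn:E.
  revert w E. induction H; intros w E; subst.
  - exists w; split; [apply rt_refl|]. split; auto. intros w' Hw. apply (Hn (tren xi w')).
    apply step_tren; auto.
  - destruct (step_tren_inv _ _ H xi w eq_refl) as [w1 [Hs ->]].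
    destruct (IHclos_refl_trans_1n Hn w1 eq_refl) as [w' [? [? ?]]].
    exists w'; split; [eapply rt_trans; [apply rt_step; eauto| auto]| auto]. Qed.

Lemma cst_normal D : normal (Cst D).
Proof. intros t H; inversion H. Qed.

Lemma red_app_cst_inv u D n : red (App u (Cst D)) n -> normal n ->
  (exists u', red u u' /\ normal u' /\ n = App u' (Cst D)) \/
  (exists w, red u (Lam w) /\ red (subst1 w (Cst D)) n).
Proof. intros H Hn. apply clos_rt_rt1n in H. remember (App u (Cst D)) as a eqn:E.
  revert u E. induction H; intros u E; subst.
  - left. exists u; split; [apply rt_refl|]. split; auto. intros u' Hu. apply (Hn (App u' (Cst D))).
    apply st_appl; auto.
  - inversion H; subst.
    + right. exists t; split; [apply rt_refl| apply clos_rt1n_rt; auto].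
    + destruct (IHclos_refl_trans_1n Hn t' eq_refl) as [[u' [? [? ?]]]|[w [? ?]]].
      * left. exists u'; split; [eapply rt_trans; [apply rt_step; eauto| auto]| auto].
      * right. exists w; split; [eapply rt_trans; [apply rt_step; eauto| auto]| auto].
    + inversion H4. Qed.

Lemma red_tapp_inv u Y n : red (TApp u Y) n -> normal n ->
  (exists u', red u u' /\ normal u' /\ n = TApp u' Y) \/
  (exists w, red u (TLam w) /\ red (tsubst1 w Y) n).
Proof. intros H Hn. apply clos_rt_rt1n in H. remember (TApp u Y) as a eqn:E.
  revert u E. induction H; intros u E; subst.
  - left. exists u; split; [apply rt_refl|]. split; auto. intros u' Hu. apply (Hn (TApp u' Y)).
    apply st_tapp; auto.
  - inversion H; subst.
    + right. exists t; split; [apply rt_refl| apply clos_rt1n_rt; auto].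
    + destruct (IHclos_refl_trans_1n Hn t' eq_refl) as [[u' [? [? ?]]]|[w [? ?]]].
      * left. exists u'; split; [eapply rt_trans; [apply rt_step; eauto| auto]| auto].
      * right. exists w; split; [eapply rt_trans; [apply rt_step; eauto| auto]| auto]. Qed.

Fixpoint hc (t : term) : Prop :=
  match t with Cst _ => True | App t _ => hc t | TApp t _ => hc t | _ => False end.

Lemma step_hc t t' : step t t' -> hc t -> hc t'.
Proof. induction 1; simpl; intuition. Qed.
Lemma red_hc t t' : red t t' -> hc t -> hc t'.
Proof. induction 1; eauto using step_hc. Qed.

Lemma app_normal n s : hc n -> normal n -> normal s -> normal (App n s).
Proof. intros Hh Hn Hs x H. inversion H; subst; simpl in Hh; try contradiction.
  - eapply Hn; eauto. - eapply Hs; eauto. Qed.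
Lemma tapp_normal n Y : hc n -> normal n -> normal (TApp n Y).
Proof. intros Hh Hn x H. inversion H; subst; simpl in Hh; try contradiction.
  eapply Hn; eauto. Qed.

Lemma neutral_fo t : forall T, has_type [] t T -> normal t -> (forall a, t <> Lam a) ->
  (forall a, t <> TLam a) -> forall x, fo x T -> tfo x t.
Proof. induction t; intros T Ht Hn HL HT y Hx; simpl.
  - inversion Ht; subst; match goal with H : nth_error [] ?k = _ |- _ => destruct k; discriminate end.
  - inversion Ht; subst; auto.
  - exfalso; eapply HL; eauto.
  - inversion Ht; subst. left. eapply IHt1; eauto.
    + intros a Ha. apply (Hn (App a t2)). apply st_appl; auto.
    + intros a ->. apply (Hn (subst1 a t2)). apply st_beta.
    + intros a ->. inversion H2.
    + simpl; auto.
  - exfalso; eapply HT; eauto.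
  - inversion Ht; subst. unfold fsubst1 in Hx. apply fo_ren in Hx. destruct Hx as [[|z] [H1 H2]]; simpl in H2.
    + right; auto.
    + subst. left. eapply IHt; eauto.
      * intros a Ha. apply (Hn (TApp a X)). apply st_tapp; auto.
      * intros a ->. inversion H3.
      * intros a ->. apply (Hn (tsubst1 a X)). apply st_tbeta.
Qed.

Lemma apply_args_snoc h Ts a : apply_args h (Ts ++ [a]) =
  match a with ATm s => App (apply_args h Ts) s | AAt X => TApp (apply_args h Ts) X end.
Proof. unfold apply_args. rewrite fold_left_app. reflexivity. Qed.

Lemma hc_apply Ts : forall h, hc h -> hc (apply_args h Ts).
Proof. induction Ts as [|a Ts IH]; intros h H; simpl; auto. apply IH. destruct a; simpl; auto. Qed.

Lemma closed_apply Ts : forall h, closed h -> Forall arg_ok Ts -> closed (apply_args h Ts).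
Proof. induction Ts as [|a Ts IH]; intros h H HF; simpl; auto. inversion HF; subst.
  apply IH; auto. destruct a; simpl in *; unfold closed in *; simpl; auto. Qed.

Lemma dag_closed A rho t : dag A rho t -> closed t.
Proof. destruct A; simpl; intros H; destruct H; auto. Qed.

Lemma main A : forall rho,
  (forall D Ts, Forall arg_ok Ts -> sem (fren rho A) (apply_args (Cst D) Ts) ->
     dag A rho (apply_args (Cst D) Ts)) /\
  (forall t, dag A rho t -> sem (fren rho A) t).
Proof.
  induction A as [X|B IHB C IHC|B IHB]; intros rho.
  - simpl; split; auto.
  - split.
    + intros D Ts HTs [Hc [n [Hr [Hn Ht]]]]. simpl in Ht. split; auto.
      exists (apply_args (Cst D) Ts). split; [apply rt_refl|]. intros s Hs. rewrite eta_lemma.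
      assert (Hsc: closed s) by (eapply dag_closed; eauto).
      destruct (IHB rho) as [_ IHB2]. destruct (IHB2 s Hs) as [_ [s' [Hr' [Hn' Ht']]]].
      destruct (IHC rho) as [IHC1 _].
      specialize (IHC1 D (Ts ++ [ATm s])). rewrite apply_args_snoc in IHC1. apply IHC1.
      * apply Forall_app; split; auto.
      * split. { unfold closed in *; simpl; split; auto. }
        exists (App n s'). split; [eapply rt_trans; [apply red_app_l; eauto| apply red_app_r; eauto]|].
        split. { apply app_normal; auto. eapply red_hc; eauto. apply hc_apply; simpl; auto. }
        eapply ty_app; eauto.
    + intros t [Hc [u [Hr Hu]]].
      set (c := Cst (fren rho B)).
      assert (Hcb: dag B rho c).
      { destruct (IHB rho) as [IH1 _]. apply (IH1 (fren rho B) []); auto. split; [exact I|].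
        exists c. split; [apply rt_refl|]. split; [apply cst_normal| constructor]. }
      specialize (Hu c Hcb). rewrite eta_lemma in Hu. destruct (IHC rho) as [_ IHC2].
      destruct (IHC2 _ Hu) as [_ [n [Hr' [Hn Ht]]]].
      destruct (red_app_cst_inv _ _ _ Hr' Hn) as [[u' [Hru [Hnu ->]]]|[w [Hrw Hsw]]].
      * inversion Ht as [| | |? ? ? A0 ? HT1 HT2| |]; subst. inversion HT2; subst.
        split; auto. exists u'. split; [eapply rt_trans; eauto|]. split; auto.
      * unfold subst1 in Hsw.
        assert (Hi : inert (scons c Var)) by (intros [|m]; simpl; [right; eexists; reflexivity| left; eexists; reflexivity]).
        destruct (red_subst_inv _ _ _ Hi Hsw Hn) as [w' [Hrw' [Hnw' ->]]].
        split; auto. exists (Lam w'). split.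
        { eapply rt_trans; [eauto| eapply rt_trans; [eauto| apply red_lam; auto]]. }
        split. { intros x Hx; inversion Hx; subst; eapply Hnw'; eauto. }
        simpl. constructor. eapply ty_abs with (G := []) (s := scons c Var); eauto.
        intros [|m] X HX; simpl in *.
        -- inversion HX; subst; reflexivity.
        -- inversion HX; subst; destruct m; discriminate.
  - split.
    + intros D Ts HTs [Hc [n [Hr [Hn Ht]]]]. simpl in Ht. split; auto.
      exists (apply_args (Cst D) Ts). split; [apply rt_refl|]. intros Y. rewrite teta_lemma.
      destruct (IHB (scons Y rho)) as [IH1 _]. specialize (IH1 D (Ts ++ [AAt Y])).
      rewrite apply_args_snoc in IH1. apply IH1.
      * apply Forall_app; split; auto. constructor; simpl; auto.
      * split; [exact Hc|]. exists (TApp n Y). split; [apply red_tapp; auto|].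
        split. { apply tapp_normal; auto. eapply red_hc; eauto. apply hc_apply; simpl; auto. }
        replace (fren (scons Y rho) B) with (fsubst1 (fren (up_ren rho) B) Y); [constructor; auto|].
        unfold fsubst1; rewrite fren_comp; apply fren_ext; intros [|k]; reflexivity.
    + intros t [Hc [u [Hr Hu]]].
      set (Y := tbound u + fbound (fren rho (All B))).
      specialize (Hu Y). rewrite teta_lemma in Hu. destruct (IHB (scons Y rho)) as [_ IH2].
      destruct (IH2 _ Hu) as [_ [n [Hr' [Hn Ht]]]].
      assert (Hfu : forall k, tfo k u -> k < Y).
      { intros k Hk. apply tbound_ok in Hk. unfold Y; lia. }
      assert (HfB : forall k, fo (S k) B -> rho k < Y).
      { intros k Hk. assert (H' : fo k (All B)) by exact Hk.
        apply (fo_ren_fwd _ rho) in H'. apply fbound_ok in H'. unfold Y; lia. }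
      set (z := fun k => if Nat.eqb k Y then 0 else S k).
      assert (HB' : fren z (fren (scons Y rho) B) = fren (up_ren rho) B).
      { rewrite fren_comp; apply fren_ext_fo; intros [|k] Hk; simpl; unfold z.
        - rewrite Nat.eqb_refl; reflexivity.
        - destruct (Nat.eqb_spec (rho k) Y); [apply HfB in Hk; lia| reflexivity]. }
      destruct (red_tapp_inv _ _ _ Hr' Hn) as [[u' [Hru [Hnu ->]]]|[w [Hrw Hsw]]].
      * inversion Ht as [| | | | |? ? A' ? HT1 Heq]; subst.
        assert (HA' : fren z (fsubst1 A' Y) = A').
        { unfold fsubst1. rewrite fren_comp. transitivity (fren (fun x => x) A');
            [| apply fren_id; auto].
          apply fren_ext_fo; intros [|k] Hk; simpl; unfold z; [rewrite Nat.eqb_refl; auto|].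
          destruct (Nat.eqb_spec k Y); [exfalso|auto].
          assert (Hk' : tfo k u').
          { apply (neutral_fo u' (All A')); auto.
            - intros a ->; inversion HT1.
            - intros a ->; apply (Hn (tsubst1 a Y)); apply st_tbeta. }
          apply (red_tfo _ _ Hru) in Hk'. apply Hfu in Hk'. lia. }
        rewrite H1, HB' in HA'.
        split; auto. exists u'. split; [eapply rt_trans; eauto|]. split; auto.
        simpl; rewrite HA'; auto.
      * unfold tsubst1 in Hsw. destruct (red_tren_inv _ _ _ Hsw Hn) as [w' [Hrw' [Hnw' ->]]].
        apply (ty_ren _ _ _) with (xi := z) in Ht. simpl in Ht. rewrite HB', tren_comp in Ht.
        assert (Hw : tren (fun x => z (scons Y (fun n => n) x)) w' = w').
        { transitivity (tren (fun x => x) w'); [| apply tren_id; auto].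
          apply tren_ext_tfo; intros [|k] Hk; simpl; unfold z; [rewrite Nat.eqb_refl; auto|].
          destruct (Nat.eqb_spec k Y); [exfalso|auto].
          apply (red_tfo _ _ Hrw') in Hk. assert (Hk2 : tfo k (TLam w)) by exact Hk.
          apply (red_tfo _ _ Hrw) in Hk2. apply Hfu in Hk2. lia. }
        rewrite Hw in Ht.
        split; auto. exists (TLam w'). split.
        { eapply rt_trans; [eauto| eapply rt_trans; [eauto| apply red_tlam; auto]]. }
        split. { intros x Hx; inversion Hx; subst; eapply Hnw'; eauto. }
        simpl. constructor. exact Ht.
Qed.

Theorem mainTheorem9 : forall A : form,
  (forall (D : form) (Ts : list arg),
      Forall arg_ok Ts ->
      sem A (apply_args (Cst D) Ts) -> dagger A (apply_args (Cst D) Ts)) /\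
  (forall t : term, dagger A t -> sem A t).
Proof.
  intros A. destruct (main A (fun n => n)) as [H1 H2].
  rewrite (fren_id A (fun n => n) (fun _ => eq_refl)) in H1, H2.
  unfold dagger. split; auto.
Qed.
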